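(* Let \(G=(V,E)\) be a connected graph with spanning tree \(T\). Let \(G_i\) be an induced subgraph of \(G\) such that the restriction \(T_i\) of \(T\) to \(V(G_i)\) is a spanning tree of \(G_i\). If \(T\) is the \(\mathcal{L}\)-tree of an LDFS ordering of \(G\), then \(T_i\) is the \(\mathcal{L}\)-tree of an LDFS ordering of \(G_i\). In particular, if \(T\) is the \(\mathcal{L}\)-tree of an LDFS ordering of \(G\) starting at \(r\in V\) and \(r\in V(G_i)\), then \(T_i\) is the \(\mathcal{L}\)-tree of an LDFS ordering of \(G_i\) starting at \(r\).
   Context: An LDFS ordering of a connected graph is any vertex ordering \((v_1,\dots,v_n)\) produced as follows for some start vertex \(s\) (then \(v_1=s\)) and some tie-breaking: give \(s\) the label \((0)\) and every other vertex the empty label; for \(i=1,\dots,n\), pick an unnumbered vertex with lexicographically largest label, set it as \(v_i\), and prepend \(i\) to the label of every unnumbered neighbor of it. The \(\mathcal{L}\)-tree of an ordering \((v_1,\dots,v_n)\) is the tree containing, for each \(i\ge2\), the edge from \(v_i\) to its rightmost neighbor \(v_j\) with \(j<i\). The restriction of \(T\) to a vertex set \(S\) is the subgraph of \(T\) induced by \(S\). *)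

(* Defs.v *)
From mathcomp Require Import all_boot.
Set Implicit Arguments. Unset Strict Implicit. Unset Printing Implicit Defensive.

(* Graphs: vertex type V : finType, edge relation e : rel V (symmetric,
   irreflexive).  A graph on a vertex set S is (S, e restricted to S). *)

Definition restr (V : finType) (S : {set V}) (r : rel V) : rel V :=
  [rel x y | [&& r x y, x \in S & y \in S]].

Definition connected_on (V : finType) (S : {set V}) (r : rel V) : Prop :=
  (exists x, x \in S) /\
  forall x y, x \in S -> y \in S -> connect (restr S r) x y.

Definition acyclic_on (V : finType) (S : {set V}) (r : rel V) : Prop :=
  ~ exists p : seq V, [/\ {subset p <= S}, uniq p, 3 <= size p & cycle r p].

Definition tree_on (V : finType) (S : {set V}) (r : rel V) : Prop :=
  connected_on S r /\ acyclic_on S r.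

Definition spanning_tree_on (V : finType) (e : rel V) (S : {set V}) (t : rel V) : Prop :=
  (forall x y, x \in S -> y \in S -> t x y -> e x y) /\ tree_on S t.

Fixpoint lexle (a b : seq nat) : bool :=
  match a, b with
  | [::], _ => true
  | _ :: _, [::] => false
  | x :: a', y :: b' => (x < y) || ((x == y) && lexle a' b')
  end.

(* Label of w after the first i vertices of sigma (numbered 1..i) have been
   numbered, each prepending its number to its unnumbered neighbours, the
   start vertex s having started with the label (0). *)
Definition ldfs_label (V : finType) (e : rel V) (sigma : seq V) (s : V)
    (i : nat) (w : V) : seq nat :=
  rev [seq j.+1 | j <- iota 0 i & e (nth w sigma j) w]
  ++ (if w == s then [:: 0] else [::]).

Definition LDFS_from (V : finType) (e : rel V) (S : {set V}) (s : V)
    (sigma : seq V) : Prop :=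
  [/\ s \in S, uniq sigma, (forall x, (x \in sigma) = (x \in S)) &
      forall i, i < size sigma -> forall w, w \in drop i sigma ->
        lexle (ldfs_label e sigma s i w) (ldfs_label e sigma s i (nth s sigma i))].

Definition LDFS (V : finType) (e : rel V) (S : {set V}) (sigma : seq V) : Prop :=
  exists s, LDFS_from e S s sigma.

(* x = v_i (i >= 2) and y is its rightmost earlier neighbour in sigma *)
Definition Ledge (V : finType) (e : rel V) (sigma : seq V) (x y : V) : bool :=
  let i := index x sigma in
  let P := [seq u <- take i sigma | e u x] in
  [&& 0 < i, i < size sigma, y \in P & y == last y P].

Definition is_Ltree (V : finType) (e : rel V) (sigma : seq V) (r : rel V) : Prop :=
  forall x y, r x y = Ledge e sigma x y || Ledge e sigma y x.

(* Main.v *)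
Require Import Defs.
From mathcomp Require Import all_boot.
Set Implicit Arguments. Unset Strict Implicit. Unset Printing Implicit Defensive.

Section Gen.
Variable V : finType.
Variable e : rel V.

Definition Lab (pre : seq V) (w : V) : seq nat :=
  rev [seq j.+1 | j <- iota 0 (size pre) & e (nth w pre j) w].

Fixpoint cmpr (l : seq V) (w b : V) : bool :=
  match l with
  | [::] => true
  | v :: l' => if e v w == e v b then cmpr l' w b else e v b
  end.

Lemma Lab_rcons pre v w :
  Lab (rcons pre v) w = if e v w then (size pre).+1 :: Lab pre w else Lab pre w.
Proof.
rewrite /Lab size_rcons -addn1 iotaD add0n filter_cat map_cat rev_cat /=.
rewrite nth_rcons ltnn eqxx.
have -> : [seq j <- iota 0 (size pre) | e (nth w (rcons pre v) j) w] =
          [seq j <- iota 0 (size pre) | e (nth w pre j) w].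
  apply: eq_in_filter => j; rewrite mem_iota add0n /= nth_rcons.
  by move=> ->.
by case: (e v w); rewrite ?addn1.
Qed.

Lemma Lab_bound pre w x : x \in Lab pre w -> x <= size pre.
Proof.
rewrite /Lab mem_rev => /mapP [j]; rewrite mem_filter mem_iota add0n => /andP [_ Hj] ->.
exact: Hj.
Qed.

Lemma lexle_Lab pre w b : lexle (Lab pre w) (Lab pre b) = cmpr (rev pre) w b.
Proof.
elim/last_ind: pre => [|pre v IH]; first by rewrite /Lab.
rewrite !Lab_rcons rev_rcons /=.
have Bw := @Lab_bound pre w; have Bb := @Lab_bound pre b.
case: (e v w); case: (e v b) => /=.
- by rewrite ltnn eqxx.
- case E: (Lab pre b) => [|y l] //=.
  have : y <= size pre by apply: Bb; rewrite E mem_head.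
  move=> Hy; apply/negbTE; rewrite negb_or ltnNge (leqW Hy) /=.
  by rewrite eqn_leq ltnNge Hy.
- case E: (Lab pre w) => [|y l] //=.
  have : y <= size pre by apply: Bw; rewrite E mem_head.
  by move=> Hy; rewrite ltnS Hy.
- exact: IH.
Qed.

Lemma label_Lab (sigma : seq V) s i w : i <= size sigma ->
  ldfs_label e sigma s i w = Lab (take i sigma) w ++ (if w == s then [:: 0] else [::]).
Proof.
move=> Hi; rewrite /ldfs_label /Lab size_takel //; congr (rev (map _ _) ++ _).
apply: eq_in_filter => j; rewrite mem_iota add0n /= => Hj.
by rewrite nth_take.
Qed.

Lemma index_rcons_in (s : seq V) v x : x \in s -> index x (rcons s v) = index x s.
Proof. by move=> Hx; rewrite -cats1 index_cat Hx. Qed.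

Lemma index_rcons_last (s : seq V) v : v \notin s -> index v (rcons s v) = size s.
Proof. by move=> Hv; rewrite -cats1 index_cat (negbTE Hv) /= eqxx addn0. Qed.

Lemma index_le_size (s : seq V) x : index x s <= size s.
Proof. by rewrite -ltnS ltnS index_size. Qed.

Lemma cmpr_exists (s : seq V) w b y : uniq s -> cmpr (rev s) w b -> y \in s -> e y w ->
  exists z, [/\ z \in s, index y s <= index z s & e z b].
Proof.
elim/last_ind: s => [|s v IH] //.
rewrite rev_rcons rcons_uniq => /andP [Hv Hu] /= Hc.
rewrite mem_rcons inE => Hy Hyw.
case Evb: (e v b).
  exists v; rewrite mem_rcons mem_head Evb index_rcons_last //; split=> //.
  by rewrite -ltnS -(size_rcons s v) index_mem mem_rcons inE.
case Evw: (e v w); rewrite Evw Evb /= in Hc => //.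
case/orP: Hy => [/eqP Hyv|Hy]; first by rewrite -Hyv Hyw in Evw.
have [z [Hz1 Hz2 Hz3]] := IH Hu Hc Hy Hyw.
exists z; rewrite mem_rcons inE Hz1 orbT !index_rcons_in //.
Qed.

Lemma cmpr_nil w b : cmpr [::] w b.
Proof. by []. Qed.

Lemma cmpr_filter (s : seq V) w b (P : pred V) : uniq s -> cmpr (rev s) w b ->
  (forall x a, x \in s -> a \in s -> index a s < index x s -> e x b -> P a -> P x) ->
  cmpr (rev (filter P s)) w b.
Proof.
elim/last_ind: s => [|s v IH] //.
rewrite rev_rcons rcons_uniq => /andP [Hv Hu] /= Hc H.
have H' : forall x a, x \in s -> a \in s -> index a s < index x s -> e x b -> P a -> P x.
  move=> x a Hx Ha; rewrite -(index_rcons_in v Hx) -(index_rcons_in v Ha).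
  by apply: H; rewrite mem_rcons inE ?Hx ?Ha orbT.
rewrite filter_rcons.
case E: (e v w == e v b); rewrite E in Hc.
  by case: (P v); rewrite ?rev_rcons /= ?E; apply: IH.
case Pv: (P v); first by rewrite rev_rcons /= E.
suff -> : filter P s = [::] by [].
apply/eqP; rewrite -[_ == _]negbK -has_filter; apply/hasP => [[a Ha Pa]].
have : P v.
  apply: (H v a); rewrite ?mem_rcons ?mem_head ?inE ?Ha ?orbT //.
  by rewrite index_rcons_in // index_rcons_last // index_mem.
by rewrite Pv.
Qed.

Definition Pl (l : seq V) x := [seq u <- take (index x l) l | e u x].
Definition par (l : seq V) x := last x (Pl l x).

Lemma Ledge_char l x y : Ledge e l x y =
  [&& 0 < index x l, index x l < size l, Pl l x != [::] & y == par l x].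
Proof.
rewrite /Ledge /par /Pl; case: (filter _ _) => [|h tl] /=; first by rewrite !andbF.
case: (y =P last h tl) => [->|]; last by rewrite !andbF.
by rewrite mem_last.
Qed.

Lemma filter_index_split (s : seq V) (P : pred V) x : x \in s -> P x ->
  let k := index x s in
  filter P s = filter P (take k s) ++ x :: filter P (drop k.+1 s) /\
  index x (filter P s) = size (filter P (take k s)).
Proof.
move=> Hx Px k.
have E : filter P s = filter P (take k s) ++ x :: filter P (drop k.+1 s).
  rewrite -{1}(cat_take_drop k s) filter_cat (drop_nth x) ?index_mem //.
  by rewrite nth_index //= Px.
split=> //; rewrite E index_cat mem_filter in_take // ltnn andbF /= eqxx addn0 //.
Qed.

Lemma take_index_filter (s : seq V) (P : pred V) x : x \in s -> P x ->
  take (index x (filter P s)) (filter P s) = filter P (take (index x s) s).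
Proof.
move=> Hx Px; have [E Hi] := filter_index_split Hx Px.
by rewrite Hi E take_size_cat.
Qed.

Lemma drop_index_filter (s : seq V) (P : pred V) x : x \in s -> P x ->
  drop (index x (filter P s)) (filter P s) = filter P (drop (index x s) s).
Proof.
move=> Hx Px; have [E Hi] := filter_index_split Hx Px.
rewrite Hi E drop_size_cat // [drop (index x s) s](drop_nth x) ?index_mem // nth_index //=.
by rewrite Px.
Qed.

Lemma last_filter_keep (l : seq V) (P : pred V) x0 : l != [::] -> P (last x0 l) ->
  filter P l != [::] /\ last x0 (filter P l) = last x0 l.
Proof.
case/lastP: l => [|l z] //= _; rewrite last_rcons filter_rcons => ->.
by rewrite last_rcons; split=> //; case: (filter P l).
Qed.

Lemma Pl_filter (s : seq V) (P : pred V) x : x \in s -> P x ->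
  Pl (filter P s) x = filter P (Pl s x).
Proof.
move=> Hx Px; rewrite /Pl take_index_filter // -!filter_predI.
by apply: eq_filter => u /=; rewrite andbC.
Qed.


Lemma last_ne_irrel (l : seq V) a b : l != [::] -> last a l = last b l.
Proof. by case: l. Qed.

Lemma mem_last_ne (l : seq V) a : l != [::] -> last a l \in l.
Proof. by case: l => [|h l] //= _; exact: mem_last. Qed.

Lemma index_last_filter (s : seq V) (f : pred V) u : uniq s -> u \in filter f s ->
  index u s <= index (last u (filter f s)) s.
Proof.
elim: s => [|h s IH] //= /andP [Hh Hu].
have Hne : u \in filter f s -> filter f s != [::] by case: (filter f s).
have Hm : u \in filter f s -> last u (filter f s) \in filter f s.
  by move=> Hin; apply: mem_last_ne; apply: Hne.
case Fh: (f h) => /=.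
  rewrite inE; case: (u =P h) => [->|Huh] /=; first by rewrite eqxx.
  move=> Hin; rewrite (last_ne_irrel h u (Hne Hin)).
  have -> : (h == u) = false by apply/eqP => Ehu; apply: Huh.
  have Hl := Hm Hin; rewrite mem_filter in Hl; case/andP: Hl => _ Hl.
  have -> : (h == last u (filter f s)) = false.
    by apply/negbTE; apply: contraNneq Hh => ->.
  by rewrite ltnS; apply: IH.
move=> Hin; have Hl := Hm Hin; rewrite mem_filter in Hl; case/andP: Hl => Hl1 _.
have -> : (h == last u (filter f s)) = false.
  by apply/negbTE; apply: contraFneq Fh => ->.
have -> : (h == u) = false.
  by apply/negbTE; move: Hin; rewrite mem_filter => /andP [Hfu _];
     apply: contraFneq Fh => ->.
by rewrite ltnS; apply: IH.
Qed.

Lemma index_take_in (s : seq V) k z : z \in take k s -> index z (take k s) = index z s.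
Proof. by move=> Hz; rewrite -{2}(cat_take_drop k s) index_cat Hz. Qed.

Lemma drop_index_ge (s : seq V) k w : uniq s -> w \in drop k s -> k <= index w s.
Proof.
move=> Hu Hw; rewrite leqNgt; apply/negP => Hlt.
have Hws : w \in s by rewrite -(cat_take_drop k s) mem_cat Hw orbT.
have Ht : w \in take k s by rewrite in_take.
move: Hu; rewrite -(cat_take_drop k s) cat_uniq => /and3P [_ /hasP H _].
by apply: H; exists w.
Qed.

Lemma head_filter_first (s : seq V) (P : pred V) a x0 : a \in s -> P a ->
  index (head x0 (filter P s)) s <= index a s.
Proof.
elim: s => [|h s IH] //=; rewrite inE => Ha Pa.
case Ph: (P h) => /=; first by rewrite eqxx.
have Has : a \in s by case/orP: Ha => // /eqP Eah; rewrite -Eah Pa in Ph.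
have Hin : a \in filter P s by rewrite mem_filter Pa.
have Hhd : head x0 (filter P s) \in filter P s.
  by case: (filter P s) Hin => //= y l _; rewrite mem_head.
rewrite mem_filter in Hhd; case/andP: Hhd => Hhd _.
have -> : (h == head x0 (filter P s)) = false.
  by apply/negbTE; apply: contraFneq Ph => ->.
have -> : (h == a) = false by apply/negbTE; apply: contraFneq Ph => ->.
by rewrite ltnS; apply: IH.
Qed.

End Gen.
Section Sig.
Variable V : finType.
Variable e : rel V.
Variable sigma : seq V.
Variable r : V.
Hypothesis Hu : uniq sigma.
Hypothesis Hall : forall x, x \in sigma.
Hypothesis HL : forall i, i < size sigma -> forall w, w \in drop i sigma ->
  lexle (ldfs_label e sigma r i w) (ldfs_label e sigma r i (nth r sigma i)).

Local Notation idx x := (index x sigma).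
Local Notation p := (par e sigma).

Lemma idx_inj x y : idx x = idx y -> x = y.
Proof. by move=> H; rewrite -(nth_index x (Hall x)) H nth_index. Qed.

Lemma nth0_r : nth r sigma 0 = r.
Proof.
have Hs : 0 < size sigma by rewrite lt0n size_eq0; apply/eqP => E; move: (Hall r); rewrite E.
have := HL Hs (w:=r); rewrite drop0 => /(_ (Hall r)); rewrite /ldfs_label /= eqxx.
by case: (nth r sigma 0 =P r).
Qed.

Lemma idx_r : idx r = 0.
Proof.
have Hs : 0 < size sigma by rewrite lt0n size_eq0; apply/eqP => E; move: (Hall r); rewrite E.
by rewrite -{1}nth0_r index_uniq.
Qed.

Lemma G_cmpr b w : 0 < idx b -> idx b <= idx w -> cmpr e (rev (take (idx b) sigma)) w b.
Proof.
move=> H0 Hbw.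
have Hi : idx b < size sigma by rewrite index_mem.
have Hw : w \in drop (idx b) sigma.
  have := Hall w; rewrite -{1}(cat_take_drop (idx b) sigma) mem_cat.
  have -> : (w \in take (idx b) sigma) = false.
    by rewrite (in_take _ (Hall w)) ltnNge Hbw.
  by [].
have Hi' : idx b <= size sigma by apply: ltnW.
have := HL Hi Hw; rewrite nth_index // !(label_Lab _ _ _ Hi').
have -> : (w == r) = false.
  apply/negbTE/eqP => Ew; move: Hbw; rewrite Ew idx_r leqn0 => /eqP Hb0.
  by rewrite Hb0 in H0.
have -> : (b == r) = false.
  by apply/negbTE/eqP => Eb; move: H0; rewrite Eb idx_r.
by rewrite !cats0 lexle_Lab.
Qed.

Lemma F1 y : idx (p y) <= idx y.
Proof.
rewrite /par; have := mem_last y (Pl e sigma y); rewrite inE.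
case/orP => [/eqP ->//|]; rewrite mem_filter => /andP [_].
by rewrite in_take ?Hall // => /ltnW.
Qed.

Lemma F1' y : Pl e sigma y != [::] -> idx (p y) < idx y /\ e (p y) y.
Proof.
move=> Hne; have := mem_last_ne y Hne; rewrite mem_filter => /andP [H1].
by rewrite in_take ?Hall.
Qed.

Lemma F2 u y : u \in Pl e sigma y -> idx u <= idx (p y).
Proof.
move=> Hin; rewrite /par.
have Hne : Pl e sigma y != [::] by case: (Pl e sigma y) Hin.
rewrite (last_ne_irrel y u Hne).
have Hu' : uniq (take (idx y) sigma) by apply: take_uniq.
have := index_last_filter Hu' Hin.
have Hl := mem_last_ne u Hne; move: Hin Hl; rewrite !mem_filter => /andP [_ H1] /andP [_ H2].
by rewrite !index_take_in.
Qed.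

Definition anc x z := exists k, iter k p z = x.

Lemma C1 x z : anc x z -> idx x <= idx z.
Proof.
case=> k <-; elim: k => [|k IH] //=.
exact: leq_trans (F1 _) IH.
Qed.

Lemma anc_refl x : anc x x.
Proof. by exists 0. Qed.

Lemma anc_par x : anc (p x) x.
Proof. by exists 1. Qed.

Lemma anc_trans x y z : anc x y -> anc y z -> anc x z.
Proof. by case=> k1 <- [k2 <-]; exists (k1 + k2); rewrite iterD. Qed.

Lemma C2 x y z : anc x z -> anc y z -> idx x <= idx y -> anc x y.
Proof.
case=> k1 Hx [k2 Hy] Hxy.
case: (leqP k2 k1) => Hk.
  exists (k1 - k2); rewrite -Hy -iterD subnK //.
have Hyx : anc y x.
  exists (k2 - k1); rewrite -Hx -iterD subnK // ltnW //.
have := C1 Hyx => Hyx'.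
have -> : x = y by apply: idx_inj; apply/eqP; rewrite eqn_leq Hxy Hyx'.
exact: anc_refl.
Qed.

Definition Inv k := forall y w, idx y < k <= idx w -> e y w -> anc y (nth r sigma k.-1).

Lemma Anc_from_Inv b x : Inv (idx b) -> e x b -> idx x < idx b -> anc x b.
Proof.
move=> HI Hxb Hx.
have Hin : x \in Pl e sigma b by rewrite mem_filter Hxb in_take ?Hall.
have Hne : Pl e sigma b != [::] by case: (Pl e sigma b) Hin.
have [Hp1 Hp2] := F1' Hne.
have A1 := HI x b; rewrite Hx leqnn in A1; have {}A1 := A1 isT Hxb.
have A2 := HI (p b) b; rewrite Hp1 leqnn in A2; have {}A2 := A2 isT Hp2.
apply: anc_trans (anc_par b).
exact: C2 A1 A2 (F2 Hin).
Qed.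

Lemma Inv_all k : 0 < k -> k <= size sigma -> Inv k.
Proof.
elim: k => [//|k IH] _ Hk.
case: (posnP k) => [k0|kpos].
  rewrite k0 => y w /andP [Hy _] _ /=.
  have : idx y = 0 by case: (idx y) Hy.
  by move=> Hy0; rewrite -Hy0 nth_index ?Hall //; apply: anc_refl.
have IH' := IH kpos (ltnW Hk).
move=> y w /andP [Hy Hw] Hyw /=.
case: (ltngtP (idx y) k) => Hyk; last first.
- by rewrite -Hyk nth_index ?Hall //; apply: anc_refl.
- by rewrite ltnS leqNgt Hyk in Hy.
set b := nth r sigma k.
have Hb : idx b = k by rewrite index_uniq.
have Hc := G_cmpr (b:=b) (w:=w); rewrite Hb in Hc.
have {}Hc := Hc kpos (ltnW Hw).
have Hyt : y \in take k sigma by rewrite in_take ?Hall.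
have [z [Hz1 Hz2 Hz3]] := cmpr_exists (take_uniq _ Hu) Hc Hyt Hyw.
rewrite !index_take_in // in Hz2.
have Hzk : idx z < k by rewrite -(in_take _ (Hall z)).
have A1 : anc z b by apply: Anc_from_Inv; rewrite ?Hb.
have A2 : anc y (nth r sigma k.-1) by apply: (IH' y w) => //; rewrite Hyk (ltnW Hw).
have A3 : anc z (nth r sigma k.-1) by apply: (IH' z b) => //; rewrite Hzk Hb leqnn.
exact: anc_trans (C2 A2 A3 Hz2) A1.
Qed.

Lemma Anc x b : e x b -> idx x < idx b -> anc x b.
Proof.
move=> Hxb Hx; apply: Anc_from_Inv => //.
apply: Inv_all; first by case: (idx b) Hx.
by rewrite ltnW // index_mem.
Qed.


Variable t : rel V.
Variable S : {set V}.
Hypothesis HLt : is_Ltree e sigma t.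
Hypothesis Hconn : forall x y, x \in S -> y \in S -> connect (restr S t) x y.
Hypothesis Hex : exists x, x \in S.

Definition tau := [seq x <- sigma | x \in S].
Definition s0 := head r tau.

Lemma tau_ne : tau != [::].
Proof.
case: Hex => x Hx; have : x \in tau by rewrite mem_filter Hx Hall.
by case: tau.
Qed.

Lemma tau_cons : tau = s0 :: behead tau.
Proof. by rewrite /s0; case: tau tau_ne. Qed.

Lemma s0_in : s0 \in S.
Proof.
have : s0 \in tau by rewrite tau_cons mem_head.
by rewrite mem_filter => /andP [].
Qed.

Lemma s0_first a : a \in S -> idx s0 <= idx a.
Proof. by move=> Ha; apply: head_filter_first => //; apply: Hall. Qed.

Lemma s0_lt a : a \in S -> a != s0 -> idx s0 < idx a.
Proof.
move=> Ha Hne; rewrite ltn_neqAle s0_first // andbT.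
by apply: contra Hne => /eqP H; apply/eqP; apply: idx_inj.
Qed.

Lemma Top v : v \in S -> v != s0 -> (Pl e sigma v != [::]) && (p v \in S).
Proof.
move=> Hv Hvs; case Hb: (_ && _) => //; exfalso.
have Hc := Hconn Hv s0_in.
case/connectP: Hc => pth Hp Hl.
have Cl : forall l y, (exists k, iter k p y = v) -> y \in S -> path (restr S t) y l ->
   exists k, iter k p (last y l) = v.
  elim=> [|z l IH] y Dy HyS //=.
  case/andP => /and3P [Htyz _ HzS] Hpl.
  apply: IH => //.
  move: Htyz; rewrite HLt !Ledge_char => /orP [] /and4P [_ _ Hne /eqP Hz].
    case: Dy => [[|k]] /= Hk.
      by move: Hb; rewrite -Hk /= Hne /= => H; move: HzS; rewrite Hz H.
    by exists k; rewrite Hz -iterSr.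
  by case: Dy => k Hk; exists k.+1; rewrite iterSr -Hz.
have [k Hk] := Cl pth v (ex_intro _ 0 erefl) Hv Hp.
rewrite -Hl in Hk.
have : idx v <= idx s0 by apply: C1; exists k.
by rewrite leqNgt s0_lt.
Qed.

Lemma Chain m y : y \in S -> idx s0 < idx (iter m p y) -> iter m p y \in S.
Proof.
elim: m y => [|m IH] y HyS Hlt //.
rewrite iterSr in Hlt *.
apply: IH => //.
have Hys : y != s0.
  apply/eqP => Eys; move: Hlt; rewrite -iterSr Eys ltnNge => /negP; apply.
  by apply: C1; exists m.+1.
by case/andP: (Top HyS Hys).
Qed.

Lemma XinS a b x : a \in S -> b \in S -> e x b -> idx a < idx x -> idx x < idx b -> x \in S.
Proof.
move=> Ha Hb Hxb Hax Hxb'.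
have [m Hm] := Anc Hxb Hxb'.
rewrite -Hm; apply: Chain => //; rewrite Hm.
exact: leq_ltn_trans (s0_first Ha) Hax.
Qed.


Lemma tau_uniq : uniq tau.
Proof. exact: filter_uniq. Qed.

Lemma index_s0 : index s0 tau = 0.
Proof. by rewrite tau_cons /= eqxx. Qed.

Lemma tau_LDFS : LDFS_from e S s0 tau.
Proof.
split.
- exact: s0_in.
- exact: tau_uniq.
- by move=> x; rewrite mem_filter Hall andbT.
move=> i Hi w Hw.
set b := nth s0 tau i.
have Hbt : b \in tau by apply: mem_nth.
have HbS : b \in S by move: Hbt; rewrite mem_filter => /andP [].
have Hib : index b tau = i by apply: index_uniq => //; apply: tau_uniq.
have Hd : drop i tau = [seq x <- drop (idx b) sigma | x \in S].
  by rewrite -Hib; apply: drop_index_filter => //; apply: Hall.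
rewrite Hd mem_filter in Hw; case/andP: Hw => HwS Hwd.
have Hbw : idx b <= idx w by apply: drop_index_ge.
case: (posnP i) => [i0|ipos].
  have -> : b = s0 by rewrite /b i0 tau_cons.
  rewrite i0.
  by rewrite /ldfs_label /= eqxx; case: (w == s0).
have Ht : take i tau = [seq x <- take (idx b) sigma | x \in S].
  by rewrite -Hib; apply: take_index_filter => //; apply: Hall.
have Hbs : b != s0.
  by apply/eqP => Eb; move: Hib; rewrite Eb index_s0 => Ei; rewrite -Ei in ipos.
have Hlt : idx s0 < idx b := s0_lt HbS Hbs.
have Hws : w != s0.
  by apply/eqP => Ew; move: Hlt; rewrite -Ew ltnNge Hbw.
have Hkpos : 0 < idx b by case: (idx b) Hlt.
have Hc := G_cmpr Hkpos Hbw.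
have Hc' := cmpr_filter (P := fun x => x \in S) (take_uniq _ Hu) Hc.
have Hi' : i <= size tau by apply: ltnW.
rewrite !(label_Lab _ _ _ Hi') (negbTE Hws) (negbTE Hbs) !cats0 Ht lexle_Lab.
apply: Hc' => x a Hx Ha; rewrite !index_take_in // => Hax Hxb HaS.
apply: (XinS HaS HbS Hxb Hax).
by rewrite -(in_take _ (Hall x)).
Qed.

Lemma Ledge_tau x y : Ledge e tau x y = [&& x \in S, y \in S & Ledge e sigma x y].
Proof.
rewrite !Ledge_char.
have Hidx0 : forall x, x \in tau -> (0 < index x tau) = (x != s0).
  move=> z Hz; rewrite lt0n; case: (z =P s0) => [->|Hzs]; first by rewrite index_s0.
  apply/eqP => H0; apply: Hzs; rewrite -(nth_index s0 Hz) H0.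
  by rewrite tau_cons.
apply/idP/idP.
- case/and4P => H0 Hsz Hne /eqP Hy.
  have Hxt : x \in tau by rewrite -index_mem.
  have HxS : x \in S by move: Hxt; rewrite mem_filter => /andP [].
  have Hxs : x != s0 by rewrite -Hidx0.
  case/andP: (Top HxS Hxs) => Hne' HpS.
  have [Hne2 Hlast] := last_filter_keep (P := fun u => u \in S) Hne' HpS.
  have Ey : y = p x by rewrite Hy /par Pl_filter // Hlast.
  have Hx0 : 0 < idx x.
    by move: Hne'; rewrite /Pl lt0n; apply: contra => /eqP ->; rewrite take0.
  by rewrite HxS Ey HpS /= Hne' eqxx index_mem Hall Hx0.
- case/and3P => HxS HyS /and4P [H0 Hsz Hne /eqP Hy].
  have Hxt : x \in tau by rewrite mem_filter HxS Hall.
  have Hxs : x != s0.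
    apply/eqP => Exs; have [H1 _] := F1' Hne; rewrite -Hy Exs in H1.
    by move: H1; rewrite ltnNge s0_first.
  case/andP: (Top HxS Hxs) => _ HpS.
  have [Hne2 Hlast] := last_filter_keep (P := fun u => u \in S) Hne HpS.
  rewrite Hidx0 // Hxs index_mem Hxt Pl_filter ?Hall // Hne2 /par Pl_filter ?Hall //.
  by rewrite Hlast Hy eqxx.
Qed.

Lemma tau_Ltree : is_Ltree e tau (restr S t).
Proof.
move=> x y; rewrite /restr /= HLt !Ledge_tau.
by case: (x \in S); case: (y \in S); rewrite /= ?andbF ?andbT.
Qed.

End Sig.

Theorem lemma5 (V : finType) (e t : rel V) (S : {set V}) :
  symmetric e -> irreflexive e -> connected_on [set: V] e ->
  symmetric t -> irreflexive t ->
  spanning_tree_on e [set: V] t ->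
  spanning_tree_on e S t ->
  (forall sigma, LDFS e [set: V] sigma -> is_Ltree e sigma t ->
     exists sigma', LDFS e S sigma' /\ is_Ltree e sigma' (restr S t)) /\
  (forall (r : V) sigma, LDFS_from e [set: V] r sigma -> is_Ltree e sigma t ->
     r \in S ->
     exists sigma', LDFS_from e S r sigma' /\ is_Ltree e sigma' (restr S t)).
Proof.
move=> _ _ _ _ _ _ [_ [[Hex Hconn] _]].
have main : forall r sigma, LDFS_from e [set: V] r sigma -> is_Ltree e sigma t ->
  [/\ LDFS_from e S (s0 sigma r S) (tau sigma S), is_Ltree e (tau sigma S) (restr S t)
    & nth r sigma 0 = r].
  move=> r sigma [_ Hu Hmem HL] HLt.
  have Hall : forall x, x \in sigma by move=> x; rewrite Hmem in_setT.
  split; first exact: (tau_LDFS Hu Hall HL HLt Hconn Hex).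
    exact: (tau_Ltree r Hall HLt Hconn Hex).
  exact: (nth0_r Hall HL).
split.
  move=> sigma [r Hr] HLt; have [H1 H2 _] := main r sigma Hr HLt.
  by exists (tau sigma S); split=> //; exists (s0 sigma r S).
move=> r sigma Hr HLt HrS; have [H1 H2 H3] := main r sigma Hr HLt.
exists (tau sigma S); split=> //.
suff <- : s0 sigma r S = r by [].
move: H3; rewrite /s0 /tau; case: sigma {Hr HLt H1 H2} => [|h l] //= ->.
by rewrite HrS.
Qed.
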